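(* $E_3\leq_{\mathrm{Learn}}\mathbf{PL}$: every $E_3$-learnable family of structures is $\mathbf{PL}$-learnable.
   Context: All structures are countable, have domain $\mathbb{N}$, are in a finite relational signature, and are identified with their atomic diagrams (elements of $2^{\mathbb{N}}$). A family of structures $\mathfrak{K}$ is a countable set of pairwise nonisomorphic such structures; $\mathcal{S}\restriction_s$ is the finite substructure on $\{0,\dots,s\}$; $\mathrm{LD}(\mathfrak{K})\subseteq2^{\mathbb{N}}$ is the set of structures with domain $\mathbb{N}$ isomorphic to a member of $\mathfrak{K}$ (subspace topology). For an equivalence relation $E$ on a space $X$, $\mathfrak{K}$ is $E$-learnable if there is a continuous $\Gamma:\mathrm{LD}(\mathfrak{K})\to X$ with $\mathcal{S}\cong\mathcal{S}'\iff\Gamma(\mathcal{S})E\Gamma(\mathcal{S}')$ on $\mathrm{LD}(\mathfrak{K})$. Fix a computable bijection $\langle\cdot,\cdot\rangle:\mathbb{N}^2\to\mathbb{N}$; for $p\in\mathbb{N}^{\mathbb{N}\times\mathbb{N}}$ let $p^{[m]}(n)=p(\langle m,n\rangle)$; $p\,E_0\,q$ (for $p,q\in\mathbb{N}^{\mathbb{N}}$) iff $\exists m\forall n\ge m\ p(n)=q(n)$; $p\,E_3\,q$ iff $\forall m\ p^{[m]}E_0q^{[m]}$. A learner is an arbitrary function from $\{\mathcal{S}\restriction_s:\mathcal{S}\in\mathrm{LD}(\mathfrak{K})\}$ to $\{\ulcorner\mathcal{A}\urcorner:\mathcal{A}\in\mathfrak{K}\}\cup\{?\}$. $\mathfrak{K}$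 is $\mathbf{PL}$-learnable if some learner $\mathbf{M}$ satisfies: for every $\mathcal{S}\in\mathrm{LD}(\mathfrak{K})$ and $\mathcal{A}\in\mathfrak{K}$, $\{n:\mathbf{M}(\mathcal{S}\restriction_n)=\ulcorner\mathcal{A}\urcorner\}$ is infinite iff $\mathcal{A}\cong\mathcal{S}$. *)

(* Defs.v *)
From mathcomp Require Import all_boot.
Set Implicit Arguments. Unset Strict Implicit. Unset Printing Implicit Defensive.

(* A finite relational signature: the list of arities of its relation symbols. *)
Definition signature := seq nat.

(* A structure with domain nat: relation symbol i is interpreted on
   (arity i)-tuples of naturals. This is exactly the atomic diagram. *)
Definition structure (L : signature) :=
  forall i : 'I_(size L), (nth 0 L i).-tuple nat -> bool.

Definition iso (L : signature) (A B : structure L) : Prop :=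
  exists f : nat -> nat, bijective f /\
    forall (i : 'I_(size L)) (t : (nth 0 L i).-tuple nat),
      A i t = B i (map_tuple f t).

(* The finite substructure S|_s on {0,...,s}, represented as a structure
   which is false on every tuple not contained in {0,...,s}. *)
Definition restrict (L : signature) (s : nat) (S : structure L) : structure L :=
  fun i t => all (fun x => x <= s) t && S i t.

Definition agree_upto (L : signature) (s : nat) (S S' : structure L) : Prop :=
  forall (i : 'I_(size L)) (t : (nth 0 L i).-tuple nat),
    all (fun x => x <= s) t -> S i t = S' i t.

(* A family: a countable set of pairwise nonisomorphic structures,
   indexed injectively by a countable type I. *)
Definition is_family (L : signature) (I : countType) (K : I -> structure L) : Prop :=
  forall i j : I, iso (K i) (K j) -> i = j.

Definition LD (L : signature) (I : countType) (K : I -> structure L)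
  (S : structure L) : Prop := exists i : I, iso (K i) S.

(* E_0 on nat^nat and E_3 on nat^(nat x nat) (p^[m](n) := p m n). *)
Definition E0 (p q : nat -> nat) : Prop := exists m, forall n, m <= n -> p n = q n.
Definition E3 (p q : nat -> nat -> nat) : Prop := forall m, E0 (p m) (q m).

(* Continuity of G : LD(K) -> nat^(nat x nat), where LD(K) carries the
   subspace topology of Cantor space (atomic diagrams) and the target the
   product topology of discrete nat. *)
Definition continuous_on_LD (L : signature) (I : countType) (K : I -> structure L)
  (G : structure L -> nat -> nat -> nat) : Prop :=
  forall S, LD K S -> forall m n, exists s, forall S', LD K S' ->
    agree_upto s S S' -> G S' m n = G S m n.

Definition E3_learnable (L : signature) (I : countType) (K : I -> structure L) : Prop :=
  exists G : structure L -> nat -> nat -> nat,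
    continuous_on_LD K G /\
    forall S S', LD K S -> LD K S' -> (iso S S' <-> E3 (G S) (G S')).

(* A learner maps S|_s to a code of a member of K (Some i) or to ? (None). *)
Definition PL_learnable (L : signature) (I : countType) (K : I -> structure L) : Prop :=
  exists M : nat -> structure L -> option I,
    forall S, LD K S -> forall i : I,
      ((forall m, exists n, m <= n /\ M n (restrict n S) = Some i) <-> iso (K i) S).

(* Main.v *)
Require Import Defs.
From mathcomp Require Import all_boot.
From mathcomp Require Import zify.
From Stdlib Require Import Classical ClassicalEpsilon.
Set Implicit Arguments. Unset Strict Implicit. Unset Printing Implicit Defensive.

Definition dec (P : Prop) : bool := if excluded_middle_informative P then true else false.
Lemma decP P : dec P = true <-> P.
Proof. rewrite /dec; case: excluded_middle_informative => //. Qed.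
Lemma dec_iff P Q : (P <-> Q) -> dec P = dec Q.
Proof.
move=> h; rewrite /dec; case: excluded_middle_informative => p;
case: excluded_middle_informative => q //; exfalso; tauto.
Qed.

Lemma find_iota_lt (f : pred nat) N y : y < find f (iota 0 N) -> y < N /\ ~~ f y.
Proof.
move=> h; have hN := find_size f (iota 0 N); rewrite size_iota in hN.
have yN : y < N by apply: leq_trans h hN.
split=> //; have := before_find 0 h; rewrite nth_iota // add0n => ->; done.
Qed.
Lemma find_iota_true (f : pred nat) N : find f (iota 0 N) < N -> f (find f (iota 0 N)).
Proof.
move=> h; have hs : has f (iota 0 N) by rewrite has_find size_iota.
have := nth_find 0 hs; rewrite nth_iota // add0n.
Qed.
Lemma find_iota_ge (f : pred nat) N y : y < N -> f y -> find f (iota 0 N) <= y.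
Proof.
move=> yN fy; rewrite leqNgt; apply/negP => h.
by have [_ /negP] := find_iota_lt h.
Qed.

Lemma mono_gen (f : nat -> nat) : (forall n, f n <= f n.+1) -> forall a b, a <= b -> f a <= f b.
Proof.
move=> h a b; elim: b => [|b IH]; first by rewrite leqn0 => /eqP ->.
rewrite leq_eqVlt => /orP [/eqP -> //|]; rewrite ltnS => /IH hb.
exact: leq_trans hb (h b).
Qed.

Lemma incr_inf (f : nat -> nat) : (forall n, f n <= f n.+1) -> (forall c, exists s, c <= f s) ->
  forall m, exists n, m <= n /\ (0 < n) && (f n.-1 < f n).
Proof.
move=> hm hu m; apply: NNPP => H.
have step : forall k, f (m.+1 + k) <= f m.+1.
  elim=> [|k IH]; first by rewrite addn0.
  apply: leq_trans IH; rewrite leqNgt; apply/negP => hk.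
  apply: H; exists (m.+1 + k.+1); split; first by lia.
  by rewrite addnS /= -addnS hk.
have [s hs] := hu (f m.+1).+1.
case: (leqP s m.+1) => hsm.
  have := mono_gen hm hsm; lia.
have := step (s - m.+1); rewrite subnKC; [lia| exact: ltnW].
Qed.

Lemma incr_fin (f : nat -> nat) B : (forall n, f n <= f n.+1) -> (forall s, f s <= B) ->
  exists m, forall n, m <= n -> ~~ ((0 < n) && (f n.-1 < f n)).
Proof.
move=> hm hb; apply: NNPP => H.
have H' : forall m, exists n, m <= n /\ (0 < n) && (f n.-1 < f n).
  move=> m; apply: NNPP => H2; apply: H; exists m => n mn; apply/negP => hh.
  by apply: H2; exists n.
have : forall c, exists n, c <= f n.
  elim=> [|c [n hn]]; first by exists 0.
  have [n' [nn' /andP [n'0 hi]]] := H' n.+1.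
  exists n'; have : f n <= f n'.-1 by apply: (mono_gen hm); lia.
  lia.
move=> /(_ B.+1) [n hn]; have := hb n; lia.
Qed.

Lemma bound_fin (P : nat -> nat -> Prop) N :
  (forall a, a < N -> exists m, forall n, m <= n -> P a n) ->
  exists m, forall a n, a < N -> m <= n -> P a n.
Proof.
elim: N => [|N IH] h; first by exists 0.
have [m1 h1] := IH (fun a aN => h a (ltnW aN)).
have [m2 h2] := h N (ltnSn N).
exists (maxn m1 m2) => a n aN mn.
rewrite ltnS leq_eqVlt in aN; case/orP: aN => [/eqP -> | aN].
  apply: h2; lia.
apply: h1 => //; lia.
Qed.

Section Main.
Local Set Implicit Arguments.

Definition det (L : signature) (I : countType) (K : I -> structure L)
  (G : structure L -> nat -> nat -> nat) s (S : structure L) m n v :=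
  forall S', LD K S' -> agree_upto s S S' -> G S' m n = v.

Definition mm (L : signature) (I : countType) (K : I -> structure L)
  (G : structure L -> nat -> nat -> nat) (i j : I) : nat :=
  match excluded_middle_informative (exists m, ~ E0 (G (K i) m) (G (K j) m)) with
  | left h => proj1_sig (constructive_indefinite_description _ h)
  | right _ => 0 end.

Lemma mm_spec (L : signature) (I : countType) (K : I -> structure L) (G : structure L -> nat -> nat -> nat) (i j : I) : (exists m, ~ E0 (G (K i) m) (G (K j) m)) ->
  ~ E0 (G (K i) (@mm L I K G i j)) (G (K j) (mm K G i j)).
Proof.
move=> h; rewrite /mm; case: excluded_middle_informative => // h'.
exact: proj2_sig (constructive_indefinite_description _ h').
Qed.

Definition wit (L : signature) (I : countType) (K : I -> structure L)
  (G : structure L -> nat -> nat -> nat) (i : I) s (S : structure L) (x : nat) : Prop :=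
  match (unpickle x : option (I * nat)) with
  | None => True
  | Some (j, k) => j = i \/ exists n, k <= n /\ exists v,
       det K G s S (mm K G i j) n v /\ v <> G (K j) (mm K G i j) n
  end.

Definition wlev (L : signature) (I : countType) (K : I -> structure L)
  (G : structure L -> nat -> nat -> nat) (i : I) s (S : structure L) : nat :=
  find (fun x => ~~ dec (wit K G i s S x)) (iota 0 s.+1).

Definition fire (L : signature) (I : countType) (K : I -> structure L)
  (G : structure L -> nat -> nat -> nat) (i : I) n (S : structure L) : bool :=
  (0 < n) && (wlev K G i n.-1 S < wlev K G i n S).

Definition Fm (L : signature) (I : countType) (K : I -> structure L)
  (G : structure L -> nat -> nat -> nat) n (S : structure L) (a : nat) : bool :=
  match (pickle_inv a : option I) with Some j => fire K G j n S | None => false end.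

Definition Mf (L : signature) (I : countType) (K : I -> structure L)
  (G : structure L -> nat -> nat -> nat) n (S : structure L) : option I :=
  let idx := find (Fm K G n S) (iota 0 n.+1) in
  if idx <= n then pickle_inv idx else None.

End Main.

Lemma agree_mono L s s' (S S' : structure L) : s <= s' -> agree_upto s' S S' -> agree_upto s S S'.
Proof.
move=> ss h i t ht; apply: h; apply: sub_all ht => x /= xs; exact: leq_trans xs ss.
Qed.

Lemma agree_restrict L s n (S S' : structure L) : s <= n ->
  (agree_upto s (restrict n S) S' <-> agree_upto s S S').
Proof.
move=> sn; have hh : forall (i : 'I_(size L)) (t : (nth 0 L i).-tuple nat), all (fun x => x <= s) t ->
   @restrict L n S i t = S i t.
  move=> i t ht; rewrite /restrict; have -> : all (fun x => x <= n) t by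
    apply: sub_all ht => x /= xs; exact: leq_trans xs sn.
  done.
split=> h i t ht; [rewrite -hh // | rewrite hh //]; exact: h.
Qed.

Lemma det_mono (L : signature) (I : countType) (K : I -> structure L) (G : structure L -> nat -> nat -> nat) s s' (S : structure L) m n v : s <= s' ->
  @det L I K G s S m n v -> det K G s' S m n v.
Proof. move=> ss h S' hS' ha; apply: h => //; exact: agree_mono ha. Qed.

Lemma det_restrict (L : signature) (I : countType) (K : I -> structure L) (G : structure L -> nat -> nat -> nat) s n (S : structure L) m k v : s <= n ->
  (@det L I K G s (restrict n S) m k v <-> det K G s S m k v).
Proof.
move=> sn; split=> h S' hS' ha; apply: h => //.
  exact: (proj2 (agree_restrict S S' sn) ha).
exact: (proj1 (agree_restrict S S' sn) ha).
Qed.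

Lemma wit_mono (L : signature) (I : countType) (K : I -> structure L) (G : structure L -> nat -> nat -> nat) (i : I) s s' (S : structure L) x : s <= s' ->
  @wit L I K G i s S x -> wit K G i s' S x.
Proof.
move=> ss; rewrite /wit; case: (unpickle x) => [[j k]|] // [->|[n [kn [v [hd hv]]]]]; first by left.
right; exists n; split=> //; exists v; split=> //; exact: det_mono hd.
Qed.

Lemma wit_restrict (L : signature) (I : countType) (K : I -> structure L) (G : structure L -> nat -> nat -> nat) (i : I) s n (S : structure L) x : s <= n ->
  (@wit L I K G i s (restrict n S) x <-> wit K G i s S x).
Proof.
move=> sn; rewrite /wit; case: (unpickle x) => [[j k]|] //.
split=> -[->|[n' [kn [v [hd hv]]]]]; (try by left); right; exists n'; split=> //;
  exists v; split=> //.
  exact: (proj1 (det_restrict K G S _ _ _ sn) hd).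
exact: (proj2 (det_restrict K G S _ _ _ sn) hd).
Qed.

Lemma wlev_restrict (L : signature) (I : countType) (K : I -> structure L) (G : structure L -> nat -> nat -> nat) (i : I) s n (S : structure L) : s <= n ->
  @wlev L I K G i s (restrict n S) = wlev K G i s S.
Proof.
move=> sn; rewrite /wlev; apply: eq_find => x /=; congr (~~ _); apply: dec_iff.
exact: wit_restrict.
Qed.

Lemma Mf_restrict (L : signature) (I : countType) (K : I -> structure L) (G : structure L -> nat -> nat -> nat) n (S : structure L) :
  @Mf L I K G n (restrict n S) = Mf K G n S.
Proof.
have e : Fm K G n (restrict n S) =1 Fm K G n S.
  move=> a; rewrite /Fm; case: (pickle_inv a) => // j.
  rewrite /fire !wlev_restrict //; lia.
by rewrite /Mf (eq_find e).
Qed.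

Lemma wlev_lt (L : signature) (I : countType) (K : I -> structure L) (G : structure L -> nat -> nat -> nat) (i : I) s (S : structure L) y :
  y < @wlev L I K G i s S -> y <= s /\ wit K G i s S y.
Proof.
move=> /find_iota_lt [ys]; rewrite negbK => /decP; done.
Qed.

Lemma wlev_ge (L : signature) (I : countType) (K : I -> structure L) (G : structure L -> nat -> nat -> nat) (i : I) s (S : structure L) y :
  y <= s -> (forall z, z <= y -> wit K G i s S z) -> y < @wlev L I K G i s S.
Proof.
move=> ys h; rewrite ltnNge; apply/negP => hw.
have hl : wlev K G i s S < s.+1 by lia.
have := find_iota_true hl; rewrite -/(wlev K G i s S).
move/negP; apply; apply/decP; exact: h.
Qed.

Lemma wlev_mono (L : signature) (I : countType) (K : I -> structure L) (G : structure L -> nat -> nat -> nat) (i : I) (S : structure L) n :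
  @wlev L I K G i n S <= wlev K G i n.+1 S.
Proof.
rewrite leqNgt; apply/negP => h.
have [ys hw] := wlev_lt h.
have : wlev K G i n.+1 S < wlev K G i n.+1 S; last by rewrite ltnn.
apply: wlev_ge; first by lia.
move=> z zy; have : z < wlev K G i n S by lia.
move=> /wlev_lt [_ hz]; apply: wit_mono hz; done.
Qed.

Lemma iso_refl L (A : structure L) : iso A A.
Proof.
exists id; split; first by exists id.
move=> i t; congr (A i _); apply: val_inj; by rewrite /= map_id.
Qed.

Lemma LD_K (L : signature) (I : countType) (K : I -> structure L) i : LD K (K i).
Proof. exists i; exact: iso_refl. Qed.

Lemma correct_fire (L : signature) (I : countType) (K : I -> structure L) (G : structure L -> nat -> nat -> nat) (S : structure L) i :
  is_family K -> continuous_on_LD K G ->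
  (forall S S', LD K S -> LD K S' -> (iso S S' <-> E3 (G S) (G S'))) ->
  LD K S -> iso (K i) S -> forall m, exists n, m <= n /\ fire K G i n S.
Proof.
move=> Hfam Hcont Hred HS Hiso.
have Hw : forall x, exists s, wit K G i s S x.
  move=> x; rewrite /wit; case: (unpickle x) => [[j k]|]; last by exists 0.
  case: (eqVneq j i) => [->|ne]; first by exists 0; left.
  have nE3 : ~ E3 (G (K i)) (G (K j)).
    move=> e; move/eqP: ne; apply; symmetry; apply: (Hfam i j).
    by apply/(Hred _ _ (LD_K K i) (LD_K K j)).
  have exm : exists m, ~ E0 (G (K i) m) (G (K j) m) by apply: not_all_ex_not.
  have hne := @mm_spec L I K G i j exm.
  set mi := mm K G i j in hne *.
  have [k1 hk1] : E0 (G (K i) mi) (G S mi).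
    by have /(Hred _ _ (LD_K K i) HS) := Hiso; apply.
  have [n hn] : exists n, maxn k k1 <= n /\ G (K i) mi n <> G (K j) mi n.
    apply: NNPP => H; apply: hne; exists (maxn k k1) => n hn.
    apply: NNPP => H2; apply: H; by exists n.
  case: hn => hn1 hn2.
  have [s hs] := Hcont S HS mi n.
  exists s; right; exists n; split; first by lia.
  exists (G S mi n); split; first exact: hs.
  rewrite -hk1 //; lia.
have Hu : forall c, exists s, c <= wlev K G i s S.
  elim=> [|c [s hs]]; first by exists 0.
  have [sc hsc] := Hw c.
  exists (maxn (maxn s sc) c); apply: wlev_ge; first by lia.
  move=> z; rewrite leq_eqVlt => /orP [/eqP ->|zc].
    apply: wit_mono hsc; lia.
  have /wlev_lt [_ hz] : z < wlev K G i s S by lia.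
  apply: wit_mono hz; lia.
move=> m; have := incr_inf (f := fun s => wlev K G i s S) (fun n => wlev_mono K G i S n) Hu m.
by [].
Qed.

Lemma wrong_fire (L : signature) (I : countType) (K : I -> structure L) (G : structure L -> nat -> nat -> nat) (S : structure L) i i0 :
  (forall S S', LD K S -> LD K S' -> (iso S S' <-> E3 (G S) (G S'))) ->
  LD K S -> iso (K i0) S -> i != i0 -> exists m, forall n, m <= n -> ~~ fire K G i n S.
Proof.
move=> Hred HS Hiso ne.
set mi := mm K G i i0.
have [k hk] : E0 (G (K i0) mi) (G S mi).
  by have /(Hred _ _ (LD_K K i0) HS) := Hiso; apply.
have nw : forall s, ~ wit K G i s S (pickle (i0, k)).
  move=> s; rewrite /wit pickleK => -[e|[n [kn [v [hd hv]]]]].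
    by rewrite e eqxx in ne.
  apply: hv; rewrite -/mi -(hd S HS) //; first by rewrite hk.
have hb : forall s, wlev K G i s S <= pickle (i0, k).
  move=> s; rewrite leqNgt; apply/negP => /wlev_lt [_ h]; exact: nw h.
exact: (incr_fin (f := fun s => wlev K G i s S) (fun n => wlev_mono K G i S n) hb).
Qed.

Theorem mainTheorem15 (L : signature) (I : countType) (K : I -> structure L) :
  is_family K -> E3_learnable K -> PL_learnable K.
Proof.
move=> Hfam [G [Hcont Hred]].
exists (Mf K G) => S HS i.
split.
- move=> Hinf; have [i0 Hi0] := HS.
  case: (eqVneq i i0) => [-> //|ne].
  have [m Hm] := wrong_fire Hred HS Hi0 ne.
  have [n [mn]] := Hinf m; rewrite Mf_restrict /Mf.
  set idx := find _ _.
  case: ifP => // hle hp.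
  have := find_iota_true (f := Fm K G n S) (N := n.+1); rewrite -/idx.
  move=> /(_ hle); rewrite /Fm hp => hf.
  by move: (Hm n mn); rewrite hf.
- move=> Hiso.
  have [m0 Hm0] : exists m0, forall a n, a < pickle i -> m0 <= n -> Fm K G n S a = false.
    apply: (bound_fin (P := fun a n => Fm K G n S a = false)) => a ha.
    rewrite /Fm; case e: (pickle_inv a) => [j|]; last by exists 0.
    have ne : j != i.
      apply/eqP => ji; move: e; rewrite ji => e.
      have := @pickle_invK I a; rewrite e /= => pa; by rewrite pa ltnn in ha.
    have [m Hm] := wrong_fire Hred HS Hiso ne.
    by exists m => n mn; apply/negbTE; apply: Hm.
  move=> m.
  have [n [hn hf]] := correct_fire Hfam Hcont Hred HS Hiso (maxn (maxn m m0) (pickle i)).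
  exists n; split; first by lia.
  rewrite Mf_restrict /Mf.
  have Fi : Fm K G n S (pickle i) by rewrite /Fm pickleK_inv.
  have e : find (Fm K G n S) (iota 0 n.+1) = pickle i.
    apply/eqP; rewrite eqn_leq; apply/andP; split.
      apply: find_iota_ge => //; lia.
    rewrite leqNgt; apply/negP => hlt.
    have hl : find (Fm K G n S) (iota 0 n.+1) < n.+1 by lia.
    have := find_iota_true hl; rewrite Hm0 //; lia.
  rewrite e; have -> : pickle i <= n by lia.
  by rewrite pickleK_inv.
Qed.
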